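(* If $n$ is odd, then $\xi=H_1+H_2+\dots+H_{n-1}$ is the unique $\{1,\dots,n-1\}$-canonical element of $\mathrm{SU}(n)$.
   Context: For $\mathrm{SU}(n)$: $E_i$ is the $n\times n$ diagonal matrix with $(i,i)$ entry $\sqrt{-1}$, others $0$; $\mathfrak t=\{\sum a_iE_i:a_i\in\mathbb R,\sum a_i=0\}$; $H_i=\frac{n-i}{n}(E_1+\dots+E_i)-\frac{i}{n}(E_{i+1}+\dots+E_n)$, $i=1,\dots,n-1$. $\mathfrak I(\mathrm{SU}(n))=\{\sum a_iE_i\in\mathfrak t: a_i\in\mathbb Z\}$. $\mathfrak I'(\mathrm{SU}(n))$ is the set of elements of $\mathfrak I(\mathrm{SU}(n))$ of the form $\sum n_iH_i$ with all $n_i\ge0$. Partial order: $\sum n_iH_i\preceq\sum n_i'H_i$ iff $n_i'\le n_i$ for all $i$. For $I\subseteq\{1,\dots,n-1\}$, $\mathfrak C_I=\{\sum n_iH_i:n_i\ge0,\ n_j>0\iff j\in I\}$; an $I$-canonical element is a maximal element of $(\mathfrak I'(\mathrm{SU}(n))\cap\mathfrak C_I,\preceq)$. *)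

(* Defs.v *)
From HB Require Import structures.
From mathcomp Require Import all_boot all_order all_algebra.
Set Implicit Arguments. Unset Strict Implicit. Unset Printing Implicit Defensive.
Import Order.TTheory GRing.Theory Num.Theory.
Local Open Scope ring_scope.

(* An element  sum_j a_j E_j  of the Lie algebra t of the maximal torus of
   SU(n) is represented by its coordinate row vector (a_0,...,a_{n-1}) : 'rV[R]_n
   (0-based indices; E_{j+1} <-> column j). *)

Definition in_t (R : realFieldType) (n : nat) (x : 'rV[R]_n) : Prop :=
  \sum_(j < n) x ord0 j = 0.

(* H_{i+1}, for i : 'I_n.-1 (so the paper's H_1..H_{n-1}):
   coordinate j (paper index j+1) is (n-(i+1))/n if j+1 <= i+1, else -(i+1)/n *)
Definition Hvec (R : realFieldType) (n : nat) (i : 'I_n.-1) : 'rV[R]_n :=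
  \row_(j < n) (if (j <= i)%N then (n%:R - (i.+1)%:R) / n%:R
                else - (i.+1)%:R / n%:R).

Definition comb (R : realFieldType) (n : nat) (c : 'I_n.-1 -> R) : 'rV[R]_n :=
  \sum_(i < n.-1) c i *: @Hvec R n i.

Definition in_I (R : realFieldType) (n : nat) (x : 'rV[R]_n) : Prop :=
  in_t x /\ forall j : 'I_n, exists z : int, x ord0 j = z%:~R.

Definition in_Iprime (R : realFieldType) (n : nat) (x : 'rV[R]_n) : Prop :=
  in_I x /\ exists c : 'I_n.-1 -> R, (forall i, 0 <= c i) /\ x = comb c.

Definition in_C (R : realFieldType) (n : nat) (I : {set 'I_n.-1})
  (x : 'rV[R]_n) : Prop :=
  exists c : 'I_n.-1 -> R,
    (forall i, 0 <= c i) /\ (forall i, 0 < c i <-> i \in I) /\ x = comb c.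

Definition preceq (R : realFieldType) (n : nat) (x y : 'rV[R]_n) : Prop :=
  exists c c' : 'I_n.-1 -> R,
    x = comb c /\ y = comb c' /\ forall i, c' i <= c i.

Definition canonical_elt (R : realFieldType) (n : nat) (I : {set 'I_n.-1})
  (x : 'rV[R]_n) : Prop :=
  in_Iprime x /\ in_C I x /\
  forall y, in_Iprime y -> in_C I y -> preceq x y -> y = x.

Definition xi (R : realFieldType) (n : nat) : 'rV[R]_n :=
  \sum_(i < n.-1) @Hvec R n i.

(* Main.v *)
Require Import Defs.
From HB Require Import structures.
From mathcomp Require Import all_boot all_order all_algebra.
From mathcomp Require Import ring lra zify.
Import Order.TTheory GRing.Theory Num.Theory.
Local Open Scope ring_scope.

Section S.
Variable R : realFieldType.

Lemma sum_succ (m : nat) : (\sum_(k < m) (k.+1)%:R : R) * 2 = (m * m.+1)%:R.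
Proof.
elim: m => [|m IH]; first by rewrite big_ord0 mul0r.
rewrite big_ord_recr /= mulrDl IH -natrM -natrD; congr (_%:R); lia.
Qed.

Lemma sum_ind (m j : nat) : (\sum_(k < m) ((j <= k)%N%:R) : R) = (m - j)%:R.
Proof.
elim: m => [|m IH]; first by rewrite big_ord0.
rewrite big_ord_recr /= IH -natrD; congr (_%:R).
case: leqP => /= H; lia.
Qed.

Lemma comb_entry m (c : 'I_m -> R) j :
  @comb R m.+1 c ord0 j = \sum_(k < m) c k * @Hvec R m.+1 k ord0 j.
Proof. by rewrite /comb summxE; apply: eq_bigr => k _; rewrite !mxE. Qed.

Lemma comb_diff m (c : 'I_m -> R) (i : 'I_m) :
  @comb R m.+1 c ord0 (widen_ord (leqnSn m) i) - @comb R m.+1 c ord0 (lift ord0 i) = c i.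
Proof.
rewrite !comb_entry -sumrB (bigD1 i) //= big1 ?addr0.
  rewrite -mulrBr !mxE /= leqnn ltnn.
  have n0 : (m.+1%:R : R) != 0 by rewrite pnatr_eq0.
  by rewrite -mulrBl opprK subrK divff // mulr1.
move=> k /eqP ki; rewrite -mulrBr !mxE /= /bump /=.
have -> : (i.+1 <= k)%N = (i <= k)%N.
  have H : (nat_of_ord k) <> (nat_of_ord i) by move=> /val_inj.
  apply/idP/idP; lia.
by rewrite subrr mulr0.
Qed.

Lemma xi_entry m (hm : ~~ odd m) (j : 'I_m.+1) :
  xi R m.+1 ord0 j = (m./2)%:R - (nat_of_ord j)%:R.
Proof.
have n0 : (m.+1%:R : R) != 0 by rewrite pnatr_eq0.
have em : m = (m./2 + m./2)%N by rewrite addnn -[LHS]odd_double_half (negbTE hm).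
rewrite /xi summxE.
transitivity ((\sum_(k < m) (((j <= k)%N%:R * m.+1%:R) - (k.+1)%:R)) / (m.+1%:R : R)).
  rewrite mulr_suml; apply: eq_bigr => k _; rewrite mxE /=.
  by case: leqP => _ /=; rewrite ?mul1r ?mul0r ?sub0r.
rewrite sumrB -mulr_suml sum_ind.
have -> : (\sum_(k < m) (k.+1)%:R : R) = (m./2 * m.+1)%:R.
  apply: (mulIf (x := 2)); first by rewrite pnatr_eq0.
  rewrite sum_succ -natrM; congr (_%:R); move: em; set p := m./2 => em; nia.
rewrite natrM -mulrBl mulfK // natrB; last by rewrite -ltnS ltn_ord.
rewrite {1}em natrD; ring.
Qed.

Lemma xi_comb m : xi R m.+1 = @comb R m.+1 (fun _ => 1).
Proof. by rewrite /xi /comb; apply: eq_bigr => i _; rewrite scale1r. Qed.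

Lemma comb_inj m (c c' : 'I_m -> R) : @comb R m.+1 c = @comb R m.+1 c' -> forall i, c i = c' i.
Proof. by move=> e i; rewrite -comb_diff e comb_diff. Qed.

Lemma coef_int m (c : 'I_m -> R) : in_I (@comb R m.+1 c) -> forall i, exists z : int, c i = z%:~R.
Proof.
move=> [_ H] i; have [z1 e1] := H (widen_ord (leqnSn m) i); have [z2 e2] := H (lift ord0 i).
by exists (z1 - z2); rewrite intrB -e1 -e2 comb_diff.
Qed.

Lemma coef_ge1 m (c : 'I_m -> R) i : in_I (@comb R m.+1 c) -> 0 < c i -> 1 <= c i.
Proof.
move=> /coef_int /(_ i) [z ->]; rewrite ltr0z ler1z; lia.
Qed.

Lemma xi_Iprime m (hm : ~~ odd m) : in_Iprime (xi R m.+1).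
Proof.
split; last by exists (fun _ => 1); split; [move=> i; rewrite ler01 | exact: xi_comb].
split.
  rewrite /in_t.
  under eq_bigr => j _ do rewrite xi_entry //.
  rewrite sumrB sumr_const card_ord big_ord_recl /=.
  have -> : (\sum_(i < m) (nat_of_ord (lift ord0 i))%:R : R) = \sum_(i < m) (i.+1)%:R.
    by apply: eq_bigr.
  have em : m = (m./2 + m./2)%N by rewrite addnn -[LHS]odd_double_half (negbTE hm).
  have -> : (\sum_(k < m) (k.+1)%:R : R) = (m./2 * m.+1)%:R.
    apply: (mulIf (x := 2)); first by rewrite pnatr_eq0.
    rewrite sum_succ -natrM; congr (_%:R); move: em; set p := m./2 => em; nia.
  by rewrite add0r -mulr_natr natrM; ring.
move=> j; exists ((m./2)%:Z - (nat_of_ord j)%:Z).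
by rewrite xi_entry // intrB.
Qed.

Lemma xi_C m : @in_C R m.+1 [set: 'I_m] (xi R m.+1).
Proof. exists (fun _ => 1); split => [i|]; first by rewrite ler01.
split; last exact: xi_comb.
by move=> i; rewrite in_setT ltr01.
Qed.
End S.

Theorem mainTheorem11 (R : realFieldType) (n : nat) (hn : odd n) :
  canonical_elt [set: 'I_n.-1] (xi R n) /\
  (forall x : 'rV[R]_n, canonical_elt [set: 'I_n.-1] x -> x = xi R n).
Proof.
case: n hn => // m /= hm.
split.
  split; first exact: xi_Iprime.
  split; first exact: xi_C.
  move=> y Iy [c'' [_ [pc'' ey'']]] [c [c' [exi [ey hle]]]].
  have c1 : forall i, c i = 1.
    by move=> i; symmetry; apply: (@comb_inj R m (fun _ => 1) c); rewrite -xi_comb.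
  have c'1 : forall i, c' i = 1.
    move=> i; apply/eqP; rewrite eq_le -(c1 i) hle /=.
    have Ic : in_I (@comb R m.+1 c') by rewrite -ey; exact: Iy.1.
    rewrite c1; apply: (@coef_ge1 R m c' i Ic).
    by rewrite (@comb_inj R m c' c'' (etrans (esym ey) ey'') i); apply/(pc'' i); rewrite in_setT.
  by rewrite ey xi_comb; apply: eq_bigr => i _; rewrite c'1.
move=> x [Ix [[c [_ [pc ex]]] mx]].
symmetry; apply: mx; [exact: xi_Iprime | exact: xi_C |].
exists c, (fun _ => 1); split => //; split; first exact: xi_comb.
move=> i; have Ic : in_I (@comb R m.+1 c) by rewrite -ex; exact: Ix.1.
by apply: (@coef_ge1 R m c i Ic); apply/(pc i); rewrite in_setT.
Qed.
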